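(* For every positive integer $k$ there exist $d_k > 0$ and $n_0$ such that for every $n\ge n_0$ the following holds. If $G$ is a $k$-partite $k$-graph with vertex classes $V_1, \dots, V_k$ each of $n$ vertices in which every vertex lies in at least $(1-d_k)n^{k-1}$ edges of $G$, then $G$ contains a perfect matching.
   Context: A $k$-partite $k$-graph with vertex classes $V_1,\dots,V_k$ is a set of $k$-element subsets (edges) of $V_1\cup\dots\cup V_k$ each containing exactly one vertex of each $V_i$. A perfect matching is a set of pairwise disjoint edges covering every vertex. *)

(* Defs.v *)
From mathcomp Require Import all_boot all_order all_algebra.
Set Implicit Arguments. Unset Strict Implicit. Unset Printing Implicit Defensive.

(* The vertex set is encoded as pairs (i, v) with i : 'I_k (class) and
   v : 'I_n (vertex within class V_i).  An edge contains exactly one vertex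
   of each class, hence is encoded as a function e : 'I_k -> 'I_n
   (e i = the vertex of the edge in class V_i). *)
Definition kpgraph (k n : nat) := {set {ffun 'I_k -> 'I_n}}.

Definition in_edge k n (i : 'I_k) (v : 'I_n) (e : {ffun 'I_k -> 'I_n}) : bool :=
  e i == v.

Definition vdeg k n (G : kpgraph k n) (i : 'I_k) (v : 'I_n) : nat :=
  #|[set e in G | in_edge i v e]|.

Definition perfect_matching k n (G M : kpgraph k n) : Prop :=
  [/\ M \subset G,
      (forall e f, e \in M -> f \in M -> e != f ->
         forall i : 'I_k, e i != f i)
    & (forall (i : 'I_k) (v : 'I_n), exists2 e, e \in M & in_edge i v e)].

(* Main.v *)
Require Import Defs.
From mathcomp Require Import all_boot all_order all_algebra.
Import Order.TTheory GRing.Theory Num.Theory.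
Set Implicit Arguments. Unset Strict Implicit. Unset Printing Implicit Defensive.

Lemma card_bigcup_le (T I : finType) (F : I -> {set T}) :
  #|\bigcup_i F i| <= \sum_i #|F i|.
Proof.
apply: (big_ind2 (fun (A : {set T}) s => #|A| <= s)) => //.
  by rewrite cards0.
move=> A1 s1 A2 s2 h1 h2; rewrite cardsU.
apply: leq_trans (leq_subr _ _) _; exact: leq_add.
Qed.

Definition upd k n (e : {ffun 'I_k -> 'I_n}) (i : 'I_k) (w : 'I_n) : {ffun 'I_k -> 'I_n} :=
  [ffun l => if l == i then w else e l].

Lemma upd_inj_le k n (A : {set {ffun 'I_k -> 'I_n}}) (i : 'I_k) :
  (forall x y w w', x \in A -> y \in A -> upd x i w = upd y i w' -> x = y) ->
  #|A| * n <= n ^ k.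
Proof.
move=> H.
have -> : n ^ k = #|[set: {ffun 'I_k -> 'I_n}]| by rewrite cardsT card_ffun !card_ord.
have <- : #|setX A [set: 'I_n]| = #|A| * n by rewrite cardsX cardsT card_ord.
rewrite -(@card_in_imset _ _ (fun p => upd p.1 i p.2)); first exact: subset_leq_card (subsetT _).
move=> [x w] [y w'] /setXP [hx _] /setXP [hy _] /= he.
have hw : w = w' by move: (congr1 (fun f : {ffun _ -> _} => f i) he); rewrite /upd !ffunE eqxx.
by rewrite (H _ _ _ _ hx hy he) hw.
Qed.

From mathcomp Require Import zify ring lra.

Definition part k n (S : kpgraph k n) : Prop :=
  (forall e f, e \in S -> f \in S -> e != f -> forall i, e i != f i) /\
  (forall i v, exists2 e, e \in S & e i = v).

Section Switch.
Variables (K n : nat) (G S : kpgraph K.+1 n) (s0 : {ffun 'I_K.+1 -> 'I_n}).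
Hypotheses (hS : part S) (s0S : s0 \in S) (s0G : s0 \notin G).
Notation T := {ffun 'I_K.+1 -> 'I_n}.

Definition blk (i : 'I_K.+1) (v : 'I_n) : T := odflt s0 [pick e in S | e i == v].

Lemma blkP i v : blk i v \in S /\ blk i v i = v.
Proof.
rewrite /blk; case: pickP => [e /andP [eS /eqP ev] | H] //=.
exfalso; have [e eS ev] := hS.2 i v.
by move: (H e); rewrite eS ev eqxx.
Qed.

Lemma S_eq (e f : T) i : e \in S -> f \in S -> e i = f i -> e = f.
Proof.
move=> eS fS h; case: (eqVneq e f) => // ne.
by move: (hS.1 e f eS fS ne i); rewrite h eqxx.
Qed.

Definition sp (x : T) (m : nat) : T :=
  if m is l.+1 then blk (inord l) (x (inord l)) else s0.

Lemma sp_in x m : sp x m \in S.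
Proof. by case: m => [|l] //=; case: (blkP (inord l) (x (inord l))). Qed.

Lemma sp_S x (l : 'I_K.+1) : sp x l.+1 = blk l (x l).
Proof. by rewrite /= inord_val. Qed.

Definition pos (i : 'I_K.+1) (j : nat) := (i.+1 + j) %% K.+2.

Definition fj (x : T) (j : nat) : T := [ffun i => sp x (pos i j) i].

Lemma pos_lt i j : pos i j < K.+2.
Proof. exact: ltn_pmod. Qed.

Lemma pos_inj i j j' : j < K.+2 -> j' < K.+2 -> pos i j = pos i j' -> j = j'.
Proof. by move=> hj hj' /eqP; rewrite /pos eqn_modDl !modn_small // => /eqP. Qed.

Lemma pos_surj (i : 'I_K.+1) m : m < K.+2 -> exists2 j, j < K.+2 & pos i j = m.
Proof.
move=> hm; exists ((m + K.+2 - i.+1) %% K.+2); first exact: ltn_pmod.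
rewrite /pos modnDmr.
have -> : i.+1 + (m + K.+2 - i.+1) = m + K.+2.
  have := ltn_ord i; lia.
by rewrite modnDr modn_small.
Qed.

Lemma pos_solve (j l : nat) : j < K.+2 -> l < K.+1 -> l.+1 != j ->
  exists i : 'I_K.+1, pos i j = l.+1.
Proof.
move=> hj hl hne.
set r := (l + K.+2 - j) %% K.+2.
have hr : (r.+1 + j) %% K.+2 = l.+1.
  rewrite addSnnS modnDml.
  have -> : l + K.+2 - j + j.+1 = l.+1 + K.+2 by lia.
  by rewrite modnDr modn_small.
have rK : r < K.+1.
  have : r < K.+2 by exact: ltn_pmod.
  rewrite ltnS leq_eqVlt => /orP [/eqP e|] //.
  move: hr; rewrite e addnC modnDr modn_small // => ej.
  by rewrite ej eqxx in hne.
by exists (Ordinal rK).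
Qed.

Lemma fj0 x : fj x 0 = x.
Proof.
apply/ffunP => i; rewrite ffunE /pos addn0 modn_small; last exact: ltn_ord i.
by rewrite sp_S; case: (blkP i (x i)).
Qed.

Definition goodP (x : T) :=
  (forall j, j < K.+2 -> fj x j \in G) /\
  (forall m m', m < K.+2 -> m' < K.+2 -> sp x m = sp x m' -> m = m').

Section WithX.
Variables (x : T) (gx : goodP x).

Definition R := [set sp x m | m : 'I_K.+2].
Definition F := [set fj x j | j : 'I_K.+2].
Definition S' := (S :\: R) :|: F.

Lemma fj_notin j (e : T) i : e \in S -> e \notin R -> e i != fj x j i.
Proof.
move=> eS eR; apply/eqP; rewrite ffunE => h.
have := S_eq eS (sp_in x (pos i j)) h => ee.
by move: eR; rewrite ee; case/imsetP; exists (Ordinal (pos_lt i j)).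
Qed.

Lemma S'_part : part S'.
Proof.
split.
  move=> e f; rewrite !inE.
  case/orP => [/andP [eR eS] | /imsetP [j _ ->]];
  case/orP => [/andP [fR fS] | /imsetP [j' _ ->]] => ne i.
  - exact: hS.1.
  - exact: fj_notin.
  - by rewrite eq_sym fj_notin.
  - apply/eqP; rewrite !ffunE => h.
    have := S_eq (sp_in _ _) (sp_in _ _) h => /(gx.2 _ _ (pos_lt _ _) (pos_lt _ _)).
    move/(pos_inj (ltn_ord j) (ltn_ord j'))=> /val_inj ej.
    by rewrite ej eqxx in ne.
move=> i v; have [tS tv] := blkP i v.
case: (boolP (blk i v \in R)) => tR.
  case/imsetP: tR => m _ em.
  have [j hj pj] := pos_surj i (ltn_ord m).
  exists (fj x j); first by rewrite inE; apply/orP; right; apply/imsetP; exists (Ordinal hj).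
  by rewrite ffunE pj -em.
by exists (blk i v) => //; rewrite !inE tR tS.
Qed.

Lemma S'_count : #|S :&: G| < #|S' :&: G|.
Proof.
have FG : F \subset G by apply/subsetP => e /imsetP [j _ ->]; exact: gx.1.
have sub : ((S :&: G) :\: R) :|: F \subset S' :&: G.
  apply/subsetP => e; rewrite !inE.
  case/orP => [/andP [-> /andP [-> ->]] | eF] //.
  by rewrite (subsetP FG _ eF) eF orbT.
have dis : ((S :&: G) :\: R) :&: F = set0.
  apply/setP => e; rewrite !inE.
  apply/negP => /andP [/andP [eR /andP [eS _]] /imsetP [j _ ej]].
  by move: (fj_notin j ord0 eS eR); rewrite -ej eqxx.
have cF : #|F| = K.+2.
  rewrite card_in_imset ?card_ord // => j j' _ _ h.
  have := congr1 (fun f : T => f ord0) h; rewrite !ffunE => h'.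
  have := S_eq (sp_in _ _) (sp_in _ _) h' => /(gx.2 _ _ (pos_lt _ _) (pos_lt _ _)).
  by move/(pos_inj (ltn_ord j) (ltn_ord j'))=> /val_inj.
have cR : #|R| <= K.+2 by rewrite -[X in _ <= X]card_ord leq_imset_card.
have s0R : s0 \in R by apply/imsetP; exists ord0.
have cI : #|(S :&: G) :&: R| <= K.+1.
  have : (S :&: G) :&: R \subset R :\ s0.
    apply/subsetP => e; rewrite !inE => /andP [/andP [_ eG] ->]; rewrite andbT.
    by apply/eqP => es; move: s0G; rewrite -es eG.
  move/subset_leq_card => h; move: cR; rewrite (cardsD1 s0 R) s0R /=; move=> hc; exact: leq_trans h hc.
have := subset_leq_card sub; rewrite cardsU dis cards0 subn0 cardsD cF.
have := subset_leq_card (subsetIl (S :&: G) R); lia.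
Qed.

End WithX.

Section Count.
Definition Nset (i : 'I_K.+1) (v : 'I_n) := [set e : T | (e i == v) && (e \notin G)].
Hypothesis hdeg : forall i v, #|Nset i v| * (2 * K.+2) <= n ^ K.
Hypothesis hn : 2 * K.+2 * K.+1 < n.

Definition Bj (j : 'I_K.+2) := [set x : T | fj x j \notin G].

Lemma Bj_card j : #|Bj j| * (2 * K.+2) <= n ^ K.+1.
Proof.
case: j => [[|j'] hj].
  have sub : Bj (Ordinal hj) \subset \bigcup_(v : 'I_n) Nset ord0 v.
    apply/subsetP => x; rewrite inE /= fj0 => xG.
    apply/bigcupP; exists (x ord0) => //; by rewrite inE eqxx xG.
  apply: leq_trans (leq_mul (leq_trans (subset_leq_card sub) (card_bigcup_le _)) (leqnn _)) _.
  rewrite big_distrl /=.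
  apply: (@leq_trans (\sum_(v < n) n ^ K)); first by apply: leq_sum => v _; exact: hdeg.
  by rewrite big_const_ord iter_addn_0 expnS mulnC.
have hj' : j' < K.+1 by [].
set i0 : 'I_K.+1 := Ordinal (leq_subr j' K : K - j' < K.+1).
set ls : 'I_K.+1 := Ordinal hj'.
have p0 : pos i0 j'.+1 = 0.
  rewrite /pos /=.
  have -> : (K - j').+1 + j'.+1 = K.+2 by lia.
  exact: modnn.
have sub : [set (fj x j'.+1, x ls) | x in Bj (Ordinal hj)] \subset
           setX (Nset i0 (s0 i0)) [set: 'I_n].
  apply/subsetP => y /imsetP [x]; rewrite inE /= => xG ->.
  by rewrite !inE /= xG ffunE p0 eqxx.
have inj : {in Bj (Ordinal hj) &, injective (fun x => (fj x j'.+1, x ls))}.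
  move=> x y _ _ [hf hl]; apply/ffunP => l.
  case: (eqVneq l ls) => [-> //| nl].
  have ne : l.+1 != j'.+1.
    by apply: contra nl => /eqP [] e; apply/eqP/val_inj.
  have [i pi] := pos_solve hj (ltn_ord l) ne.
  have := congr1 (fun f : T => f i) hf; rewrite !ffunE pi !sp_S => h.
  have [bx xl] := blkP l (x l); have [by' yl] := blkP l (y l).
  by rewrite -xl -yl (S_eq bx by' h).
have := subset_leq_card sub; rewrite card_in_imset // cardsX cardsT card_ord => h.
apply: leq_trans (leq_mul h (leqnn _)) _.
by rewrite mulnAC expnSr leq_mul2r hdeg orbT.
Qed.

Definition Dset (p : 'I_K.+2 * 'I_K.+1) :=
  [set x : T | (p.1 != (p.2).+1 :> nat) && (x p.2 == sp x p.1 p.2)].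

Lemma sp_upd (x : T) (l : 'I_K.+1) (w : 'I_n) (m : 'I_K.+2) : m != l.+1 :> nat -> sp (upd x l w) m = sp x m.
Proof.
case: m => [[|l'] hm] //= ne.
have hl' : l' < K.+1 by [].
have e : inord l' = Ordinal hl' by apply/val_inj; rewrite /= inordK.
rewrite e /upd ffunE.
case: (eqVneq (Ordinal hl') l) => // el; by rewrite -el /= eqxx in ne.
Qed.

Lemma Dset_card p : #|Dset p| * n <= n ^ K.+1.
Proof.
apply: (@upd_inj_le _ _ _ p.2) => x y w w'; rewrite !inE => /andP [ne /eqP xe] /andP [_ /eqP ye] h.
apply/ffunP => l.
case: (eqVneq l p.2) => [->|nl].
  rewrite xe ye -(sp_upd x w ne) -(sp_upd y w' ne) h //.
have := congr1 (fun f : T => f l) h; by rewrite /upd !ffunE (negbTE nl).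
Qed.

Lemma exists_good : exists x, goodP x.
Proof.
set Bad := (\bigcup_j Bj j) :|: (\bigcup_p Dset p).
have npos : 0 < n by move: hn; case: n.
have cB : #|Bad| < n ^ K.+1.
  have h1 : (\sum_j #|Bj j|) * (2 * K.+2) <= K.+2 * n ^ K.+1.
    rewrite big_distrl /=.
    apply: (@leq_trans (\sum_(j < K.+2) n ^ K.+1)); first by apply: leq_sum => j _; exact: Bj_card.
    by rewrite big_const_ord iter_addn_0 mulnC.
  have h2 : (\sum_p #|Dset p|) * n <= (K.+2 * K.+1) * n ^ K.+1.
    rewrite big_distrl /=.
    apply: (@leq_trans (\sum_(p : 'I_K.+2 * 'I_K.+1) n ^ K.+1)); first by apply: leq_sum => p _; exact: Dset_card.
    by rewrite big_const iter_addn_0 mulnC card_prod !card_ord.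
  have h3 : #|Bad| <= \sum_j #|Bj j| + \sum_p #|Dset p|.
    rewrite cardsU; apply: leq_trans (leq_subr _ _) _.
    exact: leq_add (card_bigcup_le _) (card_bigcup_le _).
  have Npos : 0 < n ^ K.+1 by rewrite expn_gt0 npos.
  move: h1 h2 h3 Npos hn.
  set a := \sum_j _; set b := \sum_p _; set N := n ^ K.+1; set c := #|Bad|.
  move=> h1 h2 h3 Np hn'.
  have qn : 0 < 2 * K.+2 * n by rewrite !muln_gt0 npos.
  rewrite -(ltn_pmul2r qn).
  have e0 : c * (2 * K.+2 * n) <= (a + b) * (2 * K.+2 * n) by rewrite leq_mul2r h3 orbT.
  have e1 : a * (2 * K.+2) * n <= K.+2 * N * n := leq_mul h1 (leqnn n).
  have e2 : b * n * (2 * K.+2) <= K.+2 * K.+1 * N * (2 * K.+2) := leq_mul h2 (leqnn _).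
  have e3 : N * K.+2 * (2 * K.+2 * K.+1) < N * K.+2 * n.
    by rewrite ltn_pmul2l ?muln_gt0 ?Np.
  lia.
have [x xB] : exists x, x \notin Bad.
  case: (set_0Vmem (~: Bad)) => [e | [x]]; last by rewrite inE => ?; exists x.
  have := cardsC Bad; rewrite e cards0 addn0 card_ffun !card_ord => h.
  by rewrite h ltnn in cB.
have D : forall m l (hm : m < K.+2) (hl : l < K.+1), m != l.+1 ->
    sp x m = sp x l.+1 -> x \in Bad.
  move=> m l hm hl ne e; rewrite inE; apply/orP; right; apply/bigcupP.
  exists (Ordinal hm, Ordinal hl) => //; rewrite inE /= ne /=.
  rewrite e (sp_S x (Ordinal hl)).
  by case: (blkP (Ordinal hl) (x (Ordinal hl))) => _ ->.
exists x; split.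
  move=> j hj; apply: contraR xB => jG; rewrite inE; apply/orP; left.
  by apply/bigcupP; exists (Ordinal hj) => //; rewrite inE.
move=> m m' hm hm' e; apply/eqP; apply: contraR xB => ne.
case: m' hm' e ne => [|l] hm' e ne.
  case: m hm e ne => [|l] hm e ne; first by [].
  by apply: (D 0 l) => //; rewrite e.
by apply: (D m l).
Qed.

Lemma improve : exists S2, part S2 /\ #|S :&: G| < #|S2 :&: G|.
Proof.
have [x gx] := exists_good.
exists (S' x); split; [exact: S'_part | exact: S'_count].
Qed.

End Count.
End Switch.

Lemma deg_bound K n (G : kpgraph K.+1 n) (i : 'I_K.+1) (v : 'I_n) (d : rat) :
  0 < n -> d = ((2 * K.+2)%N%:R^-1)%R ->
  ((1 - d) * (n%:R ^+ K) <= (vdeg G i v)%:R)%R ->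
  #|Nset G i v| * (2 * K.+2) <= n ^ K.
Proof.
move=> npos -> hd.
set A := [set e : {ffun 'I_K.+1 -> 'I_n} | e i == v].
have hA : #|A| <= n ^ K.
  have h := @upd_inj_le _ _ A i.
  have : #|A| * n <= n ^ K.+1.
    apply: h => x y w w'; rewrite !inE => /eqP xv /eqP yv h.
    apply/ffunP => l; case: (eqVneq l i) => [->|nl]; first by rewrite xv yv.
    have := congr1 (fun f : {ffun 'I_K.+1 -> 'I_n} => f l) h; by rewrite /upd !ffunE (negbTE nl).
  by rewrite expnSr leq_pmul2r.
have hsum : #|Nset G i v| + vdeg G i v <= #|A|.
  have -> : #|Nset G i v| + vdeg G i v = #|Nset G i v :|: [set e in G | in_edge i v e]|.
    rewrite cardsU.
    have -> : Nset G i v :&: [set e in G | in_edge i v e] = set0.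
      by apply/setP => e; rewrite !inE; case: (e \in G); rewrite ?andbF ?andbT.
    by rewrite cards0 subn0.
  apply: subset_leq_card; apply/subsetP => e; rewrite !inE /in_edge.
  by case/orP => /andP [].
have hb := leq_trans hsum hA.
rewrite -(ler_nat rat) natrM natrX.
move: hb; rewrite -(ler_nat rat) natrD natrX => hb.
set Q : rat := ((2 * K.+2)%N%:R)%R in hd *.
have Qpos : (0 < Q)%R by rewrite /Q ltr0n muln_gt0.
set a := (n%:R ^+ K)%R in hd hb *.
set b := (#|Nset G i v|%:R)%R in hb *.
set c := ((vdeg G i v)%:R)%R in hd hb.
have hb' : (b <= Q^-1 * a)%R.
  have e : (a - (1 - Q^-1) * a = Q^-1 * a)%R by rewrite mulrBl mul1r opprB addrC subrK.
  rewrite -e; apply: le_trans (_ : b <= a - c)%R _; first by rewrite lerBrDr.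
  by rewrite lerD2l lerN2.
apply: le_trans (ler_wpM2r (ltW Qpos) hb') _.
by rewrite mulrAC mulVf ?mul1r // gt_eqF.
Qed.

Theorem lemma8p18 :
  forall k : nat, (0 < k)%N ->
  exists (d : rat) (n0 : nat), (0 < d)%R /\
    forall n : nat, (n0 <= n)%N ->
    forall G : kpgraph k n,
      (forall (i : 'I_k) (v : 'I_n),
         ((1 - d) * (n%:R ^+ k.-1) <= (vdeg G i v)%:R)%R) ->
      exists M : kpgraph k n, perfect_matching G M.
Proof.
case=> [//|K] _.
exists (((2 * K.+2)%N%:R^-1)%R : rat), (2 * K.+2 * K.+1).+1; split.
  by rewrite (invr_gt0 (R:=rat)) ltr0n muln_gt0.
move=> n hn G hdeg.
have hn' : 2 * K.+2 * K.+1 < n := hn.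
have npos : 0 < n := leq_ltn_trans (leq0n _) hn'.
have hd : forall i v, #|Nset G i v| * (2 * K.+2) <= n ^ K.
  by move=> i v; apply: (deg_bound npos erefl); exact: hdeg.
have cardT : forall S : kpgraph K.+1 n, #|S :&: G| <= n ^ K.+1.
  by move=> S; apply: leq_trans (max_card _) _; rewrite card_ffun !card_ord.
have main : forall m (S : kpgraph K.+1 n), part S -> n ^ K.+1 <= #|S :&: G| + m ->
    exists M, perfect_matching G M.
  elim=> [|m IH] S hS hc; case: (boolP (S \subset G)) => sG.
  - exists S; split => //; first exact: hS.1.
    by move=> i v; have [e eS ev] := hS.2 i v; exists e => //; rewrite /in_edge ev.
  - have [s0 s0S s0G] := subsetPn sG.
    have [S2 [hS2 hlt]] := improve hS s0S s0G hd hn'.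
    have := cardT S2; rewrite addn0 in hc; lia.
  - exists S; split => //; first exact: hS.1.
    by move=> i v; have [e eS ev] := hS.2 i v; exists e => //; rewrite /in_edge ev.
  - have [s0 s0S s0G] := subsetPn sG.
    have [S2 [hS2 hlt]] := improve hS s0S s0G hd hn'.
    apply: (IH S2 hS2); lia.
pose S0 : kpgraph K.+1 n := [set [ffun => v] | v : 'I_n].
apply: (main (n ^ K.+1) S0); last exact: leq_addl.
split.
  move=> e f /imsetP [v _ ->] /imsetP [w _ ->] ne i; rewrite !ffunE.
  by apply: contra ne => /eqP ->.
by move=> i v; exists [ffun => v]; [apply/imsetP; exists v | rewrite ffunE].
Qed.
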